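(* Let $\eta_2=\int_1^\infty\frac{\mathrm{d}t}{\sqrt{t^4-1}}$ and let $\mathrm{cleafh}_2:(-\eta_2,\eta_2)\to\mathbb{R}$ be the hyperbolic leaf function of basis $2$. For every real $l$ with $2l\in(-\eta_2,\eta_2)$, writing $C=\mathrm{cleafh}_2(l)$, $$\mathrm{cleafh}_2(2l)=\frac{C^4+2C^2-1}{-C^4+2C^2+1}.$$
   Context: For a natural number $n$, let $\eta_n=\int_1^\infty\frac{\mathrm{d}t}{\sqrt{t^{2n}-1}}$. The hyperbolic leaf function $\mathrm{cleafh}_n$ is the solution $r(l)$ on $(-\eta_n,\eta_n)$ of $\frac{\mathrm{d}^2r}{\mathrm{d}l^2}=n\,r^{2n-1}$ with $r(0)=1$, $r'(0)=0$; it is even, and for $l\ge0$ it is the inverse of $r\mapsto\int_1^r\frac{\mathrm{d}t}{\sqrt{t^{2n}-1}}$, $r\ge1$. *)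

(* Defs.v *)
From Stdlib Require Import Reals.
From Coquelicot Require Import Coquelicot.
Open Scope R_scope.

Definition eta (n : nat) : R :=
  RInt_gen (fun t => / sqrt (t ^ (2 * n) - 1)) (at_right 1) (Rbar_locally p_infty).

Definition is_cleafh (n : nat) (r : R -> R) : Prop :=
  exists r' : R -> R,
    (forall l, - eta n < l < eta n ->
       is_derive r l (r' l) /\ is_derive r' l (INR n * r l ^ (2 * n - 1))) /\
    r 0 = 1 /\ r' 0 = 0.

(* Main.v *)
Require Import Defs.
From Stdlib Require Import Reals Lra Ranalysis5.
From Coquelicot Require Import Coquelicot.
Open Scope R_scope.

Lemma dmul (f g : R -> R) x a b : is_derive f x a -> is_derive g x b ->
  is_derive (fun t => f t * g t) x (a * g x + f x * b).
Proof. intros. apply (is_derive_mult f g x a b); auto. intros; apply Rmult_comm. Qed.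
Lemma dplus (f g : R -> R) x a b : is_derive f x a -> is_derive g x b ->
  is_derive (fun t => f t + g t) x (a + b).
Proof. intros. exact (is_derive_plus f g x a b H H0). Qed.
Lemma dminus (f g : R -> R) x a b : is_derive f x a -> is_derive g x b ->
  is_derive (fun t => f t - g t) x (a - b).
Proof. intros. exact (is_derive_minus f g x a b H H0). Qed.
Lemma dconst (c x : R) : is_derive (fun _ => c) x 0.
Proof. exact (is_derive_const c x). Qed.
Lemma did x : is_derive (fun t : R => t) x 1.
Proof. exact (@is_derive_id R_AbsRing x). Qed.
Lemma drefl (f : R -> R) s u df : is_derive f (s - u) df ->
  is_derive (fun v => f (s - v)) u (- df).
Proof.
  intros H.
  assert (Hg : is_derive (fun v => s - v) u (0 - 1)).
  { apply dminus. apply dconst. apply did. }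
  pose proof (is_derive_comp f (fun v => s - v) u df _ H Hg) as K.
  replace (- df) with (scal (0 - 1) df). exact K.
  unfold scal; simpl; unfold mult; simpl. ring.
Qed.

Ltac dleaf := match goal with H : is_derive ?f ?t _ |- is_derive ?g ?t _ => constr_eq f g; exact H
  | H : is_derive ?f ?t _ |- is_derive (fun u => ?f u) ?t _ => exact H end.
Ltac dstep := match goal with
  | |- is_derive (fun _ => _ - _) _ _ => apply dminus
  | |- is_derive (fun _ => _ + _) _ _ => apply dplus
  | |- is_derive (fun _ => _ * _) _ _ => apply dmul
  | |- is_derive (fun _ => IZR _) _ _ => apply dconst
  | _ => dleaf end.
Ltac dtac := repeat dstep.

Lemma psi_deriv (a b c d : R -> R) t :
  is_derive a t (c t) -> is_derive b t (- d t) ->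
  is_derive c t (2 * a t ^ 3) -> is_derive d t (- (2 * b t ^ 3)) ->
  c t ^ 2 = a t ^ 4 - 1 -> d t ^ 2 = b t ^ 4 - 1 -> 0 < a t -> 0 < b t ->
  is_derive (fun u => ((a u * a u + 1) * (b u * b u + 1) - a u * b u * c u * d u) /
                      (a u * b u * (a u * a u + 1) * (b u * b u + 1) + c u * d u)) t 0.
Proof.
  intros Ha Hb Hc Hd HX HY pa pb.
  set (x := a t) in *. set (y := b t) in *. set (X := c t) in *. set (Y := d t) in *.
  assert (HD : 0 < x * y * (x * x + 1) * (y * y + 1) + X * Y).
  { set (P := x * y * (x * x + 1) * (y * y + 1)).
    assert (Pp : 0 < P) by (unfold P; repeat apply Rmult_lt_0_compat; nra).
    assert (h1 : 0 <= x^4 - 1) by nra.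
    assert (h2 : 0 <= y^4 - 1) by nra.
    assert (h3 : x^4 - 1 < x^2 * (x^2+1)^2) by nra.
    assert (h4 : y^4 - 1 < y^2 * (y^2+1)^2) by nra.
    assert (h5 : (X*Y)^2 < P^2).
    { replace ((X*Y)^2) with ((x^4-1)*(y^4-1)) by (rewrite <- HX, <- HY; ring).
      replace (P^2) with ((x^2 * (x^2+1)^2) * (y^2 * (y^2+1)^2)) by (unfold P; ring).
      apply Rle_lt_trans with ((x^2 * (x^2+1)^2) * (y^4-1)).
      apply Rmult_le_compat_r; lra. apply Rmult_lt_compat_l; nra. }
    nra. }
  evar (dN : R). evar (dD : R).
  assert (HN : is_derive (fun u => (a u * a u + 1) * (b u * b u + 1) - a u * b u * c u * d u) t dN).
  { unfold dN. dtac. }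
  assert (HDD : is_derive (fun u => a u * b u * (a u * a u + 1) * (b u * b u + 1) + c u * d u) t dD).
  { unfold dD. dtac. }
  pose proof (is_derive_div _ _ t dN dD HN HDD) as K.
  cbv beta in K. fold x y X Y in K.
  replace 0 with ((dN * (x * y * (x * x + 1) * (y * y + 1) + X * Y) -
        ((x * x + 1) * (y * y + 1) - x * y * X * Y) * dD) /
       (x * y * (x * x + 1) * (y * y + 1) + X * Y) ^ 2).
  apply K; lra.
  unfold dN, dD. fold x y X Y.
  unfold Rdiv.
  match goal with |- ?e * _ = 0 => replace e with 0 end. ring.
  transitivity (((2)*x^1*y^2*Y^1 + (2)*x^1*Y^1 + (2)*x^3*y^4*Y^1 + (2)*x^3*y^2*Y^1 + (-1)*y^1*X^1*Y^2 + (1)*x^1*Y^3) * (X^2 - (x^4-1))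
    + ((-2)*x^2*y^1*X^1 + (-1)*y^1*X^1 + (-2)*x^4*y^3*X^1 + (-2)*x^2*y^3*X^1 + (-1)*x^4*y^1*X^1 + (1)*x^5*Y^1 + (-1)*x^1*Y^1) * (Y^2 - (y^4-1))).
  rewrite HX, HY. ring. ring.
Qed.

Section S.
Variables (r r' : R -> R) (e : R).
Hypothesis HD : forall l, - e < l < e -> is_derive r l (r' l) /\ is_derive r' l (2 * r l ^ 3).
Hypothesis H0 : r 0 = 1.
Hypothesis H0' : r' 0 = 0.

Lemma const_on (f : R -> R) t : (forall u, -e < u < e -> is_derive f u 0) ->
  -e < t < e -> f t = f 0.
Proof.
  intros Hf Ht.
  destruct (Rtotal_order t 0) as [h|[h|h]].
  - apply (eq_is_derive f t 0); [intros u Hu; apply Hf; lra | lra].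
  - subst; reflexivity.
  - symmetry. apply (eq_is_derive f 0 t); [intros u Hu; apply Hf; lra | lra].
Qed.

Lemma energy t : -e < t < e -> r' t ^ 2 = r t ^ 4 - 1.
Proof.
  intros Ht.
  assert (K : (fun u => r' u * r' u - r u * r u * r u * r u) t =
              (fun u => r' u * r' u - r u * r u * r u * r u) 0).
  { apply (const_on (fun u => r' u * r' u - r u * r u * r u * r u)); auto. intros u Hu. destruct (HD u Hu) as [A B].
    evar (dv : R).
    assert (Hd : is_derive (fun u => r' u * r' u - r u * r u * r u * r u) u dv).
    { unfold dv. dtac. }
    replace 0 with dv. exact Hd. unfold dv. ring. }
  cbv beta in K. rewrite H0, H0' in K. nra.
Qed.

Lemma cont a : -e < a < e -> continuity_pt r a.
Proof.
  intros Ha. apply continuity_pt_filterlim. apply (@ex_derive_continuous R_AbsRing R_NormedModule r a).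
  exists (r' a). apply (HD a Ha).
Qed.

Lemma pos t : -e < t < e -> 0 < r t.
Proof.
  intros Ht.
  assert (nz : forall z, -e < z < e -> r z <> 0).
  { intros z Hz E. pose proof (energy z Hz) as K. rewrite E in K. nra. }
  destruct (Rtotal_order (r t) 0) as [h|[h|h]]; [|exfalso; exact (nz t Ht h)|exact h].
  exfalso.
  destruct (Rtotal_order t 0) as [h2|[h2|h2]].
  - destruct (IVT_interv r t 0) as [z [Hz Ez]].
    + intros a Ha. apply cont; lra.
    + exact h2.
    + exact h.
    + lra.
    + apply (nz z); [lra | exact Ez].
  - subst. lra.
  - destruct (IVT_interv (fun u => - r u) 0 t) as [z [Hz Ez]].
    + intros a Ha. apply (continuity_pt_opp r). apply cont; lra.
    + exact h2.
    + lra.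
    + lra.
    + apply (nz z); [lra | lra].
Qed.

Lemma main l : - e < 2 * l < e ->
    r (2 * l) = (r l ^ 4 + 2 * r l ^ 2 - 1) / (- r l ^ 4 + 2 * r l ^ 2 + 1).
Proof.
  intros Hl.
  destruct (Req_dec l 0) as [->|hl].
  { rewrite Rmult_0_r, H0. field. }
  set (s := 2 * l).
  set (psi := fun u => ((r u * r u + 1) * (r (s - u) * r (s - u) + 1) - r u * r (s - u) * r' u * r' (s - u)) /
                      (r u * r (s - u) * (r u * r u + 1) * (r (s - u) * r (s - u) + 1) + r' u * r' (s - u))).
  assert (Hder : forall u, (0 <= u <= l \/ l <= u <= 0) -> is_derive psi u 0).
  { intros u Hu.
    assert (I1 : -e < u < e) by (unfold s in *; lra).
    assert (I2 : -e < s - u < e) by (unfold s in *; lra).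
    destruct (HD u I1) as [A1 B1]. destruct (HD (s - u) I2) as [A2 B2].
    apply (psi_deriv r (fun v => r (s - v)) r' (fun v => r' (s - v)) u).
    - exact A1.
    - apply drefl. exact A2.
    - exact B1.
    - apply drefl. exact B2.
    - apply energy; exact I1.
    - apply energy; exact I2.
    - apply pos; exact I1.
    - apply pos; exact I2. }
  assert (Heq : psi 0 = psi l).
  { destruct (Rtotal_order l 0) as [h|[h|h]].
    - symmetry. apply (eq_is_derive psi l 0); [intros u Hu; apply Hder; lra | lra].
    - lra.
    - apply (eq_is_derive psi 0 l); [intros u Hu; apply Hder; lra | lra]. }
  assert (Il : -e < l < e) by lra.
  assert (Is : -e < s < e) by (unfold s; lra).
  unfold psi in Heq. replace (s - 0) with s in Heq by ring. replace (s - l) with l in Heq by (unfold s; ring).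
  rewrite H0, H0' in Heq.
  pose proof (energy l Il) as EC. pose proof (pos l Il) as PC.
  pose proof (energy s Is) as ER. pose proof (pos s Is) as PR.
  fold s.
  set (C := r l) in *. set (C' := r' l) in *. set (R0 := r s) in *. set (R' := r' s) in *.
  assert (L : (1 * 1 + 1) * (R0 * R0 + 1) - 1 * R0 * 0 * R' = 2 * (R0 * R0 + 1)) by ring.
  rewrite L in Heq.
  replace (1 * R0 * (1 * 1 + 1) * (R0 * R0 + 1) + 0 * R') with (2 * R0 * (R0 * R0 + 1)) in Heq by ring.
  replace (2 * (R0 * R0 + 1) / (2 * R0 * (R0 * R0 + 1))) with (1 / R0) in Heq by (field; nra).
  replace ((C * C + 1) * (C * C + 1) - C * C * C' * C') with ((C*C+1) * (- C^4 + 2 * C^2 + 1)) in Heq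
    by (replace (C * C * C' * C') with (C^2 * C'^2) by ring; rewrite EC; ring).
  replace (C * C * (C * C + 1) * (C * C + 1) + C' * C') with ((C*C+1) * (C^4 + 2 * C^2 - 1)) in Heq
    by (replace (C' * C') with (C'^2) by ring; rewrite EC; ring).
  assert (C4 : 1 <= C^4) by (pose proof (pow2_ge_0 C'); lra).
  assert (C1 : 1 <= C).
  { destruct (Rle_or_lt 1 C) as [h|h]; auto. exfalso.
    assert (C2 : C^2 < 1) by nra.
    assert (C^4 = C^2 * C^2) by ring. nra. }
  assert (P1 : 0 < C^4 + 2 * C^2 - 1) by nra.
  assert (K : (C*C+1) * (- C^4 + 2 * C^2 + 1) * R0 = (C*C+1) * (C^4 + 2 * C^2 - 1)).
  { replace ((C*C+1) * (- C^4 + 2 * C^2 + 1)) with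
      ((C*C+1) * (- C^4 + 2 * C^2 + 1) / ((C*C+1) * (C^4 + 2 * C^2 - 1)) * ((C*C+1) * (C^4 + 2 * C^2 - 1)))
      by (field; split; nra).
    rewrite <- Heq. field. nra. }
  assert (Dn : - C^4 + 2 * C^2 + 1 <> 0).
  { intro Z. rewrite Z in K. nra. }
  apply (Rmult_eq_reg_l ((C*C+1) * (- C^4 + 2 * C^2 + 1))).
  rewrite K. field. exact Dn.
  apply Rmult_integral_contrapositive_currified; [nra | exact Dn].
Qed.
End S.

Theorem mainTheorem9 :
  forall r : R -> R, is_cleafh 2 r ->
  forall l : R, - eta 2 < 2 * l < eta 2 ->
    r (2 * l) =
      (r l ^ 4 + 2 * r l ^ 2 - 1) / (- r l ^ 4 + 2 * r l ^ 2 + 1).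
Proof.
  intros r [r' [HD [H0 H0']]] l Hl.
  apply (main r r' (eta 2)); auto.
Qed.
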